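(* For every $n\ge1$ there is a bijection $S\mapsto M$ from the set of signatures in $[2n]$ onto the set of Motzkin paths of length $n$ such that the weight of $S$, namely $\big(\prod_{i=1}^{2n}s(i)\big)t^{|S|/2}$, equals the weight $\rho(M)$ of $M$, where $\rho(M)$ is the product of its step weights: an up step at height $h\ge0$ has weight $(h+1)(h+2)t$, a level step at height $h\ge0$ has weight $(h+1)^2$, and a down step at height $h\ge1$ has weight $(h+1)h$.
   Context: A signature in $[2n]$ is a set $S\subseteq[2n]$ such that: (i) $S$ has $k$ odd and $k$ even elements for some $k\ge0$; (ii) for each $j\in[n]$ at most one of $2j-1,2j$ lies in $S$; (iii) for every $i\in[2n]$, $S\cap\{1,\dots,i\}$ has at least as many odd as even elements. With $f(i)$ (resp. $g(i)$) the number of odd (resp. even) elements of $S$ less than $i$, its vector is $s(i)=f(i)-g(i)$ if $i\in S$ is even, and $s(i)=f(i)-g(i)+1$ otherwise. A Motzkin path of length $n$ is a lattice path from $(0,0)$ to $(n,0)$ staying weakly above the $x$-axis with steps up $(1,1)$, down $(1,-1)$ and level $(1,0)$; the height of a step is the $y$-coordinate of its starting point. *)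

(* Defs.v *)
From HB Require Import structures.
From mathcomp Require Import all_boot all_order all_algebra.
Set Implicit Arguments. Unset Strict Implicit. Unset Printing Implicit Defensive.
Import GRing.Theory.

(* Convention: a subset S of [2n] = {1,...,2n} is represented as
   S : {set 'I_(2*n)}, the ordinal i standing for the integer i+1.
   Hence "i represents an odd element" is  odd i.+1. *)

Section Signatures.
Variable n : nat.
Implicit Types (S : {set 'I_(2 * n)}).

Definition inS S (m : nat) : bool := [exists i in S, i.+1 == m].

Definition is_signature S : bool :=
  [&& #|[set i in S | odd i.+1]| == #|[set i in S | ~~ odd i.+1]|,
      [forall j : 'I_n, ~~ (inS S (j.*2.+1) && inS S (j.*2.+2))] &
      [forall i : 'I_(2 * n),
         #|[set m in S | (m <= i) && ~~ odd m.+1]|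
           <= #|[set m in S | (m <= i) && odd m.+1]|]].

Definition sig_f S (i : 'I_(2 * n)) : nat := #|[set m in S | (m < i) && odd m.+1]|.
Definition sig_g S (i : 'I_(2 * n)) : nat := #|[set m in S | (m < i) && ~~ odd m.+1]|.

Local Open Scope ring_scope.
Definition sig_vec S (i : 'I_(2 * n)) : int :=
  if (i \in S) && ~~ odd i.+1 then (sig_f S i)%:Z - (sig_g S i)%:Z
  else (sig_f S i)%:Z - (sig_g S i)%:Z + 1.

(* weight of S: (prod_i s(i)) t^{|S|/2}, as a polynomial in t = 'X *)
Definition sig_weight S : {poly int} :=
  (\prod_(i < 2 * n) sig_vec S i)%:P * 'X^(#|S| %/ 2)%N.

End Signatures.

Inductive step := Up | Level | Down.

Definition step_eqb (a b : step) : bool :=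
  match a, b with Up, Up | Level, Level | Down, Down => true | _, _ => false end.
Lemma step_eqP : Equality.axiom step_eqb.
Proof. by case; case; constructor. Qed.
HB.instance Definition _ := hasDecEq.Build step step_eqP.

Fixpoint motz_ok (h : nat) (s : seq step) : bool :=
  match s with
  | [::] => h == 0
  | Up :: s' => motz_ok h.+1 s'
  | Level :: s' => motz_ok h s'
  | Down :: s' => (0 < h) && motz_ok h.-1 s'
  end.

Definition is_motzkin (n : nat) (M : seq step) : bool :=
  (size M == n) && motz_ok 0 M.

Local Open Scope ring_scope.
(* product of step weights; h is the height of the starting point of the step *)
Fixpoint motz_weight_from (h : nat) (s : seq step) : {poly int} :=
  match s with
  | [::] => 1
  | Up :: s' => (((h.+1 * h.+2)%N)%:R *: 'X) * motz_weight_from h.+1 s'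
  | Level :: s' => ((h.+1 ^ 2)%N)%:R%:P * motz_weight_from h s'
  | Down :: s' => ((h.+1 * h)%N)%:R%:P * motz_weight_from h.-1 s'
  end.

Definition rho (M : seq step) : {poly int} := motz_weight_from 0 M.

(* Main.v *)
Require Import Defs.
From mathcomp Require Import all_boot all_order all_algebra.
From mathcomp Require Import zify ring.
Set Implicit Arguments. Unset Strict Implicit. Unset Printing Implicit Defensive.
Import GRing.Theory.

Definition Uc (c : seq step) k := \sum_(0 <= j < k) (nth Level c j == Up).
Definition Dc (c : seq step) k := \sum_(0 <= j < k) (nth Level c j == Down).

Lemma Uc0 c : Uc c 0 = 0. Proof. by rewrite /Uc big_geq. Qed.
Lemma Dc0 c : Dc c 0 = 0. Proof. by rewrite /Dc big_geq. Qed.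
Lemma Uc_cons x s k : Uc (x :: s) k.+1 = (x == Up) + Uc s k.
Proof. by rewrite /Uc big_nat_recl. Qed.
Lemma Dc_cons x s k : Dc (x :: s) k.+1 = (x == Down) + Dc s k.
Proof. by rewrite /Dc big_nat_recl. Qed.
Lemma Uc_S c k : Uc c k.+1 = Uc c k + (nth Level c k == Up).
Proof. by rewrite /Uc big_nat_recr. Qed.
Lemma Dc_S c k : Dc c k.+1 = Dc c k + (nth Level c k == Down).
Proof. by rewrite /Dc big_nat_recr. Qed.
Lemma Uc_nil k : Uc [::] k = 0. Proof. by rewrite /Uc big1 // => i _ /=; case: i. Qed.
Lemma Dc_nil k : Dc [::] k = 0. Proof. by rewrite /Dc big1 // => i _ /=; case: i. Qed.

Lemma Uc_ge c k : size c <= k -> Uc c k = Uc c (size c).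
Proof.
move=> hk; rewrite /Uc (@big_cat_nat _ _ _ (size c)) //= [X in _ + X]big1_seq ?addn0 //.
by move=> j /andP[_]; rewrite mem_index_iota => /andP[hj _]; rewrite nth_default.
Qed.
Lemma Dc_ge c k : size c <= k -> Dc c k = Dc c (size c).
Proof.
move=> hk; rewrite /Dc (@big_cat_nat _ _ _ (size c)) //= [X in _ + X]big1_seq ?addn0 //.
by move=> j /andP[_]; rewrite mem_index_iota => /andP[hj _]; rewrite nth_default.
Qed.

Lemma motzP h c : motz_ok h c <->
  (forall k, Dc c k <= h + Uc c k) /\ Dc c (size c) = h + Uc c (size c).
Proof.
elim: c h => [|x s IH] h /=.
  rewrite Uc_nil Dc_nil; split=> [/eqP-> | [_ H]]; [by split=> // k; rewrite Uc_nil Dc_nil | apply/eqP; lia].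
have E : (forall k, Dc (x :: s) k <= h + Uc (x :: s) k) <->
   (forall k, (x == Down) + Dc s k <= h + ((x == Up) + Uc s k)).
  split=> H k; first by have := H k.+1; rewrite Uc_cons Dc_cons.
  by case: k => [|k]; [rewrite Uc0 Dc0 | rewrite Uc_cons Dc_cons; exact: H].
rewrite E Uc_cons Dc_cons; clear E.
case: x => /=.
- rewrite IH; split=> -[H1 H2]; split=> [k|]; try (have := H1 k); lia.
- rewrite IH; split=> -[H1 H2]; split=> [k|]; try (have := H1 k); lia.
- split.
    move=> /andP[h0 /IH [H1 H2]]; split=> [k|]; try (have := H1 k); lia.
  case=> H1 H2; have h0 : 0 < h by have := H1 0; rewrite Uc0 Dc0; lia.
  rewrite h0 /=; apply/IH; split=> [k|]; try (have := H1 k); lia.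
Qed.

Lemma sum_trim (F : nat -> bool) i N : i <= N ->
  \sum_(0 <= m < N) ((m < i) && F m) = \sum_(0 <= m < i) F m.
Proof.
move=> iN; rewrite (@big_cat_nat _ _ _ i) //= [X in _ + X]big1_seq ?addn0.
  by apply: eq_big_nat => m /andP[_ ->].
by move=> m /andP[_]; rewrite mem_index_iota => /andP[im _]; rewrite ltnNge im.
Qed.

Lemma sum_pair (G : nat -> nat) k :
  \sum_(0 <= m < k.*2) G m = \sum_(0 <= j < k) (G j.*2 + G j.*2.+1).
Proof.
elim: k => [|k IH]; first by rewrite !big_geq.
by rewrite doubleS !big_nat_recr //= IH addnA.
Qed.

Lemma prod_pair (G : nat -> int) k :
  (\prod_(0 <= m < k.*2) G m = \prod_(0 <= j < k) (G j.*2 * G j.*2.+1))%R.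
Proof.
elim: k => [|k IH]; first by rewrite !big_geq.
by rewrite doubleS !big_nat_recr //= IH mulrA.
Qed.

Section Aux.
Variable n : nat.
Implicit Types S : {set 'I_(2 * n)}.

Definition bS S (m : nat) : bool := inS S m.+1.

Lemma bS_ord S (i : 'I_(2 * n)) : bS S i = (i \in S).
Proof.
apply/existsP/idP => [[j /andP[jS /eqP ij]]|iS]; last by exists i; rewrite iS eqxx.
by have -> : i = j by apply: val_inj; case: ij.
Qed.

Lemma bS_in S m (hm : m < 2 * n) : bS S m = (Ordinal hm \in S).
Proof. exact: (bS_ord S (Ordinal hm)). Qed.

Lemma bS_out S m : 2 * n <= m -> bS S m = false.
Proof.
move=> hm; apply/existsP => -[j /andP[_ /eqP ij]].
have := ltn_ord j; lia.
Qed.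

Lemma card_sum S (Q : nat -> bool) :
  #|[set m in S | Q m]| = \sum_(0 <= m < 2 * n) (bS S m && Q m).
Proof.
rewrite -sum1_card big_mkcond /= big_mkord.
by apply: eq_bigr => i _; rewrite inE bS_ord; case: (_ && _).
Qed.

Lemma card_sumS S : #|S| = \sum_(0 <= m < 2 * n) bS S m.
Proof.
rewrite -sum1_card big_mkcond /= big_mkord.
by apply: eq_bigr => i _; rewrite bS_ord; case: (_ \in _).
Qed.

Definition code S j : step :=
  if bS S j.*2 then Up else if bS S j.*2.+1 then Down else Level.
Definition phi S : seq step := mkseq (code S) n.

Lemma size_phi S : size (phi S) = n. Proof. by rewrite size_mkseq. Qed.

Lemma nth_phi S j : nth Level (phi S) j = code S j.
Proof.
case: (ltnP j n) => hj; first by rewrite nth_mkseq.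
by rewrite nth_default ?size_mkseq // /code !bS_out //; lia.
Qed.

Definition pairok S := forall j, ~~ (bS S j.*2 && bS S j.*2.+1).

Lemma sig_pairok S : is_signature S -> pairok S.
Proof.
case/and3P => _ /forallP H _ j; case: (ltnP j n) => hj.
  exact: (H (Ordinal hj)).
by rewrite bS_out //; lia.
Qed.

Lemma bS_even S j : bS S j.*2 = (code S j == Up).
Proof. by rewrite /code; case: (bS S j.*2) => //; case: (bS S j.*2.+1). Qed.

Lemma bS_odd S j : pairok S -> bS S j.*2.+1 = (code S j == Down).
Proof.
move=> /(_ j); rewrite /code; case: (bS S j.*2) => //=.
  by move/negbTE->.
by case: (bS S j.*2.+1).
Qed.

Definition Fo S i := \sum_(0 <= m < i) (bS S m && odd m.+1).
Definition Fe S i := \sum_(0 <= m < i) (bS S m && ~~ odd m.+1).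

Lemma Fo_double S k : Fo S k.*2 = Uc (phi S) k.
Proof.
rewrite /Fo sum_pair /Uc; apply: eq_bigr => j _.
by rewrite nth_phi /= odd_double /= andbT andbF addn0 bS_even.
Qed.

Lemma Fe_double S k : pairok S -> Fe S k.*2 = Dc (phi S) k.
Proof.
move=> pS; rewrite /Fe sum_pair /Dc; apply: eq_bigr => j _.
by rewrite nth_phi /= odd_double /= andbF andbT add0n bS_odd.
Qed.

Lemma Fo_doubleS S k : Fo S k.*2.+1 = Uc (phi S) k.+1.
Proof.
by rewrite /Fo big_nat_recr //= -/(Fo S k.*2) Fo_double Uc_S odd_double andbT nth_phi bS_even.
Qed.

Lemma Fe_doubleS S k : pairok S -> Fe S k.*2.+1 = Dc (phi S) k.
Proof.
move=> pS.
by rewrite /Fe big_nat_recr //= -/(Fe S k.*2) Fe_double // odd_double andbF addn0.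
Qed.

End Aux.

Section Aux2.
Variable n : nat.
Implicit Types S : {set 'I_(2 * n)}.

Lemma card_lt S (i : nat) (Q : nat -> bool) : i <= 2 * n ->
  #|[set m in S | (m < i) && Q m]| = \sum_(0 <= m < i) (bS S m && Q m).
Proof.
move=> hi; rewrite (card_sum S (fun m => (m < i) && Q m)) -(sum_trim _ hi).
by apply: eq_bigr => m _; rewrite andbCA.
Qed.

Lemma card_le S (i : 'I_(2 * n)) (Q : nat -> bool) :
  #|[set m in S | (m <= i) && Q m]| = \sum_(0 <= m < i.+1) (bS S m && Q m).
Proof.
rewrite -(card_lt S Q (ltn_ord i)); congr #|_|; apply/setP => m; by rewrite !inE ltnS.
Qed.

Lemma sig_f_eq S (i : 'I_(2 * n)) : sig_f S i = Fo S i.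
Proof. by rewrite /sig_f (card_lt S (fun m => odd m.+1) (ltnW (ltn_ord i))). Qed.
Lemma sig_g_eq S (i : 'I_(2 * n)) : sig_g S i = Fe S i.
Proof. by rewrite /sig_g (card_lt S (fun m => ~~ odd m.+1) (ltnW (ltn_ord i))). Qed.

Lemma sigP S : 0 < n -> pairok S -> is_signature S <-> motz_ok 0 (phi S).
Proof.
move=> n0 pS; rewrite motzP size_phi.
have Eo : #|[set i in S | odd i.+1]| = Uc (phi S) n.
  by rewrite (card_sum S (fun m => odd m.+1)) mul2n -Fo_double.
have Ee : #|[set i in S | ~~ odd i.+1]| = Dc (phi S) n.
  by rewrite (card_sum S (fun m => ~~ odd m.+1)) mul2n -Fe_double.
rewrite /is_signature Eo Ee.
split.
  case/and3P => /eqP H1 _ /forallP H3; split => [k|]; last by rewrite H1.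
  case: (ltnP n k) => hk.
    by rewrite Dc_ge ?size_phi ?(ltnW hk) // Uc_ge ?size_phi ?(ltnW hk) // H1.
  case: k hk => [|k] hk; first by rewrite Uc0 Dc0.
  have hi : k.*2.+1 < 2 * n by lia.
  have := H3 (Ordinal hi); rewrite (card_le S _ (fun m => ~~ odd m.+1)) (card_le S _ (fun m => odd m.+1)) /= -/(Fo S _) -/(Fe S _).
  by rewrite -doubleS Fo_double Fe_double.
case=> H1 H2; apply/and3P; split; first by rewrite H2.
  by apply/forallP => j; exact: pS.
apply/forallP => i; rewrite (card_le S _ (fun m => ~~ odd m.+1)) (card_le S _ (fun m => odd m.+1)) -/(Fo S _) -/(Fe S _).
have := odd_double_half i.+1; case: (odd i.+1) => /= <-.
  rewrite add1n Fo_doubleS Fe_doubleS // Uc_S.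
  by apply: leq_trans (H1 _) (leq_addr _ _).
by rewrite add0n Fo_double Fe_double.
Qed.

End Aux2.

Local Open Scope ring_scope.

Definition wt (x : int) (s : step) : int :=
  match s with Up => (x + 1) * (x + 2) | Level => (x + 1) * (x + 1) | Down => (x + 1) * x end.

Lemma motz_weightE h c : motz_ok h c ->
  motz_weight_from h c =
  (\prod_(0 <= j < size c) wt (h%:Z + (Uc c j)%:Z - (Dc c j)%:Z) (nth Level c j))%:P
    * 'X^(Uc c (size c)).
Proof.
elim: c h => [|x s IH] h /=.
  by move=> _; rewrite big_geq // Uc_nil expr0 mulr1.
rewrite big_nat_recl // Uc_cons Uc0 Dc0 /=.
case: x => /=.
- move=> /IH ->.
  rewrite add1n exprS -mul_polyC polyCM.
  have -> : ((h.+1 * h.+2)%N%:R : int) = wt (h%:Z + 0 - 0) Up by rewrite /wt natz; lia.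
  have -> : \prod_(0 <= i < size s) wt (h%:Z + (Uc (Up :: s) i.+1)%:Z - (Dc (Up :: s) i.+1)%:Z) (nth Level s i)
     = \prod_(0 <= i < size s) wt (h.+1%:Z + (Uc s i)%:Z - (Dc s i)%:Z) (nth Level s i).
    by apply: eq_bigr => j _; rewrite Uc_cons Dc_cons /=; congr wt; lia.
  by rewrite polyCM; ring.
- move=> /IH ->.
  rewrite add0n polyCM.
  have -> : ((h.+1 ^ 2)%N%:R : int) = wt (h%:Z + 0 - 0) Level by rewrite /wt natz; lia.
  have -> : \prod_(0 <= i < size s) wt (h%:Z + (Uc (Level :: s) i.+1)%:Z - (Dc (Level :: s) i.+1)%:Z) (nth Level s i)
     = \prod_(0 <= i < size s) wt (h%:Z + (Uc s i)%:Z - (Dc s i)%:Z) (nth Level s i).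
    by apply: eq_bigr => j _; rewrite Uc_cons Dc_cons /=; congr wt; lia.
  by rewrite mulrA.
- case/andP; case: h => [//|h] _ /IH ->.
  rewrite add0n polyCM /=.
  have -> : ((h.+2 * h.+1)%N%:R : int) = wt (h.+1%:Z + 0 - 0) Down by rewrite /wt natz; lia.
  have -> : \prod_(0 <= i < size s) wt (h.+1%:Z + (Uc (Down :: s) i.+1)%:Z - (Dc (Down :: s) i.+1)%:Z) (nth Level s i)
     = \prod_(0 <= i < size s) wt (h%:Z + (Uc s i)%:Z - (Dc s i)%:Z) (nth Level s i).
    by apply: eq_bigr => j _; rewrite Uc_cons Dc_cons /=; congr wt; lia.
  by rewrite mulrA.
Qed.

Section Aux3.
Variable n : nat.
Implicit Types S : {set 'I_(2 * n)}.

Definition sv S (m : nat) : int :=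
  if bS S m && ~~ odd m.+1 then (Fo S m)%:Z - (Fe S m)%:Z
  else (Fo S m)%:Z - (Fe S m)%:Z + 1.

Lemma prod_sig S : \prod_(i < 2 * n) sig_vec S i = \prod_(0 <= m < 2 * n) sv S m.
Proof.
rewrite big_mkord; apply: eq_bigr => i _.
by rewrite /sig_vec /sv sig_f_eq sig_g_eq bS_ord.
Qed.

Lemma sv_pair S j : pairok S ->
  sv S j.*2 * sv S j.*2.+1 = wt ((Uc (phi S) j)%:Z - (Dc (phi S) j)%:Z) (code S j).
Proof.
move=> pS; rewrite /sv /= odd_double /= andbF andbT.
rewrite Fo_double Fe_double // Fo_doubleS Fe_doubleS // Uc_S nth_phi bS_odd //.
case: (code S j) => /=; rewrite /wt; lia.
Qed.

Lemma weight_eq S : (0 < n)%N -> is_signature S -> sig_weight S = rho (phi S).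
Proof.
move=> hn sS; have pS := sig_pairok sS.
have hm : motz_ok 0 (phi S) := (sigP hn pS).1 sS.
have [_] := (motzP 0 (phi S)).1 hm; rewrite size_phi add0n => HD.
rewrite /rho (motz_weightE hm) size_phi /sig_weight prod_sig.
have := prod_pair (sv S) n; rewrite -mul2n => ->.
congr (_%:P * 'X^_).
  by apply: eq_bigr => j _; rewrite sv_pair // nth_phi add0r.
have -> : #|S| = (Uc (phi S) n + Dc (phi S) n)%N.
  have := sum_pair (bS S) n; rewrite -mul2n card_sumS => ->.
  rewrite /Uc /Dc -big_split /=.
  by apply: eq_bigr => j _; rewrite nth_phi bS_even bS_odd.
rewrite HD; lia.
Qed.

End Aux3.
Section Aux4.
Variable n : nat.
Implicit Types S : {set 'I_(2 * n)}.

Lemma bS_eq S1 S2 : pairok S1 -> pairok S2 -> phi S1 = phi S2 ->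
  forall m, bS S1 m = bS S2 m.
Proof.
move=> p1 p2 E m; have := odd_double_half m; case: (odd m) => <-.
  by rewrite add1n !bS_odd // -!nth_phi E.
by rewrite add0n !bS_even -!nth_phi E.
Qed.

Definition invphi (M : seq step) : {set 'I_(2 * n)} :=
  [set i : 'I_(2 * n) | nth Level M i./2 == (if odd i then Down else Up)].

Lemma invphi_code M j : size M = n -> code (invphi M) j = nth Level M j.
Proof.
move=> sM; rewrite /code; case: (ltnP j n) => hj; last first.
  by rewrite !bS_out ?nth_default ?sM //; lia.
have h1 : (j.*2 < 2 * n)%N by lia.
have h2 : (j.*2.+1 < 2 * n)%N by lia.
rewrite (bS_in _ h1) (bS_in _ h2) !inE /= odd_double doubleK uphalf_double /=.
by case: (nth Level M j).
Qed.

Lemma invphi_pairok M : size M = n -> pairok (invphi M).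
Proof.
move=> sM j; case: (ltnP j n) => hj; last by rewrite bS_out //; lia.
have h1 : (j.*2 < 2 * n)%N by lia.
have h2 : (j.*2.+1 < 2 * n)%N by lia.
rewrite (bS_in _ h1) (bS_in _ h2) !inE /= odd_double doubleK uphalf_double /=.
by case: (nth Level M j).
Qed.

Lemma invphiK M : size M = n -> phi (invphi M) = M.
Proof.
move=> sM; apply: (@eq_from_nth _ Level); first by rewrite size_phi.
by move=> i _; rewrite nth_phi invphi_code.
Qed.

End Aux4.

Local Close Scope ring_scope.

Theorem mainTheorem4 (n : nat) (hn : 1 <= n) :
  exists phi : {set 'I_(2 * n)} -> seq step,
    [/\ forall S, is_signature S -> is_motzkin n (phi S),
        {in is_signature (n:=n) &, injective phi},
        forall M, is_motzkin n M -> exists2 S, is_signature S & phi S = M &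
        forall S, is_signature S -> sig_weight S = rho (phi S)].
Proof.
exists (@phi n); split.
- move=> S sS; rewrite /is_motzkin size_phi eqxx /=.
  exact: (sigP hn (sig_pairok sS)).1 sS.
- move=> S1 S2 s1 s2 E; apply/setP => x.
  by rewrite -!bS_ord (bS_eq (sig_pairok s1) (sig_pairok s2) E).
- move=> M /andP[/eqP sM hM]; exists (invphi n M); last exact: invphiK.
  apply/(sigP hn (invphi_pairok sM)); by rewrite invphiK.
- by move=> S sS; exact: weight_eq.
Qed.
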